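(* Let $\mathcal S,\mathcal T$ be Hermitian operators on a finite-dimensional Hilbert space satisfying $\mathcal S^2+\mathcal T^2=\mathbb 1$, let $|\psi\rangle$ be a unit vector, and let $m$ be a positive integer. Then $$\langle\psi|(\mathbb 1+\mathcal S)^m+(\mathbb 1+\mathcal T)^m|\psi\rangle\le\max_{\theta\in\mathbb R}\Big((1+\cos\theta)^m+(1+\sin\theta)^m\Big).$$ *)

(* Defs.v *)
(* Finite-dimensional Hilbert space = C^n with C an algebraically
   closed numeric field (e.g. algC), standard inner product. *)
From HB Require Import structures.
From mathcomp Require Import all_boot all_order all_algebra.
Set Implicit Arguments. Unset Strict Implicit. Unset Printing Implicit Defensive.
Import Order.TTheory GRing.Theory Num.Theory.
Local Open Scope ring_scope.

Definition adjmx (C : numClosedFieldType) (m n : nat) (A : 'M[C]_(m, n)) : 'M[C]_(n, m) :=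
  (map_mx Num.conj A)^T.

Definition is_hermitian (C : numClosedFieldType) (n : nat) (A : 'M[C]_n) : Prop :=
  adjmx A = A.

Definition expect (C : numClosedFieldType) (n : nat) (A : 'M[C]_n) (psi : 'cV[C]_n) : C :=
  (adjmx psi *m A *m psi) 0 0.

(* Main.v *)
Require Import Defs.
From HB Require Import structures.
From mathcomp Require Import all_boot all_order all_algebra.
From mathcomp Require Import polyrcf spectral sesquilinear.
From mathcomp Require Import ring lra zify.
Import Order.TTheory GRing.Theory Num.Theory.
Local Open Scope ring_scope.
Set Implicit Arguments. Unset Strict Implicit. Unset Printing Implicit Defensive.

Definition rsub (C : numClosedFieldType) := {x : C | x \is Num.real}.
HB.instance Definition _ (C : numClosedFieldType) := [isSub for (@sval C _ : rsub C -> C)].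
HB.instance Definition _ (C : numClosedFieldType) := [Choice of rsub C by <:].
HB.instance Definition _ (C : numClosedFieldType) := [SubChoice_isSubComUnitRing of rsub C by <:].
HB.instance Definition _ (C : numClosedFieldType) := [SubComUnitRing_isSubIntegralDomain of rsub C by <:].
HB.instance Definition _ (C : numClosedFieldType) := [SubIntegralDomain_isSubField of rsub C by <:].
Section RS.
Variable C : numClosedFieldType.
Local Notation R := (rsub C).
Definition rle (x y : R) := (val x <= val y).
Definition rlt (x y : R) := (val x < val y).
Definition rnorm (x : R) : R := Sub `|val x| (normr_real (val x)).
Lemma rval0 : val (0 : R) = 0. Proof. by []. Qed.
Lemma rle0_add (x y : R) : rle 0 x -> rle 0 y -> rle 0 (x + y).
Proof. rewrite /rle /= => ??; exact: addr_ge0. Qed.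
Lemma rle0_mul (x y : R) : rle 0 x -> rle 0 y -> rle 0 (x * y).
Proof. rewrite /rle /= => ??; exact: mulr_ge0. Qed.
Lemma rle0_anti (x : R) : rle 0 x -> rle x 0 -> x = 0.
Proof. rewrite /rle /= => h1 h2; apply: val_inj => /=; apply/eqP; by rewrite eq_le h1 h2. Qed.
Lemma rsub_ge0 (x y : R) : rle 0 (y - x) = rle x y.
Proof. by rewrite /rle /= subr_ge0. Qed.
Lemma rle0_total (x : R) : rle 0 x || rle x 0.
Proof. by rewrite /rle /=; case: x => x /= /orP[]->; rewrite ?orbT. Qed.
Lemma rnormN (x : R) : rnorm (- x) = rnorm x.
Proof. by apply: val_inj; rewrite /= normrN. Qed.
Lemma rge0_norm (x : R) : rle 0 x -> rnorm x = x.
Proof. by rewrite /rle => h; apply: val_inj; rewrite /= ger0_norm. Qed.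
Lemma rlt_def (x y : R) : rlt x y = (y != x) && rle x y.
Proof. by rewrite /rlt /rle lt_def. Qed.
End RS.
HB.instance Definition _ (C : numClosedFieldType) :=
  Num.IntegralDomain_isLeReal.Build (rsub C) (@rle0_add C) (@rle0_mul C) (@rle0_anti C)
   (@rsub_ge0 C) (@rle0_total C) (@rnormN C) (@rge0_norm C) (@rlt_def C).
Section IVT.
Variable C : numClosedFieldType.
Local Notation R := (rsub C).
Lemma rleE (x y : R) : (x <= y) = (val x <= val y). Proof. by []. Qed.
Lemma rltE (x y : R) : (x < y) = (val x < val y). Proof. by []. Qed.
Lemma hmap (p : {poly R}) (x : R) : (map_poly val p).[val x] = val p.[x].
Proof. by rewrite horner_map. Qed.
End IVT.

Section IVT.
Variable C : numClosedFieldType.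
Local Notation R := (rsub C).

Lemma mX : map_poly (val : R -> C) 'X = 'X.
Proof. by rewrite map_polyX. Qed.
Lemma mC c : map_poly (val : R -> C) c%:P = (val c)%:P.
Proof. by rewrite map_polyC. Qed.

Lemma mX' : map_poly (@sval C (fun x => x \is Num.real) : R -> C) 'X = 'X.
Proof. exact: mX. Qed.
Lemma mC' c : map_poly (@sval C (fun x => x \is Num.real) : R -> C) c%:P = (sval c)%:P.
Proof. exact: mC. Qed.

Lemma mapconj (p : {poly R}) : map_poly Num.conj (map_poly val p) = map_poly val p.
Proof.
rewrite -map_poly_comp; apply: eq_map_poly => x /=.
by apply/CrealP; case: x.
Qed.

Lemma rsub_ivt_aux n (p : {poly R}) (a b : R) : (size p <= n)%N -> a <= b ->
  p.[a] * p.[b] <= 0 -> exists2 x, a <= x <= b & root p x.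
Proof.
elim: n p => [|n IH] p.
  rewrite leqn0 size_poly_eq0 => /eqP -> ab _; exists a; rewrite ?lexx ?ab //.
  by rewrite root0.
move=> szp ab hab.
have [->|p0] := eqVneq p 0; first by exists a; rewrite ?lexx ?ab // root0.
have [/eqP sz1|sz1] := eqVneq (size p) 1%N.
  have [c c0 pc] := size_poly1P p sz1.
  by move: hab; rewrite pc !hornerC -expr2 leNgt exprn_even_gt0 // c0.
set F := map_poly (val : R -> C) p.
have : size F != 1%N by rewrite size_map_poly.
case/closed_rootP => z rz.
have [zr|zr] := boolP (z \is Num.real).
  pose r : R := Sub z zr.
  have rpr : root p r.
    by rewrite /root -(inj_eq val_inj) /= -hmap.
  have [rab|rab] := boolP (a <= r <= b); first by exists r.
  have d0 : 'X - r%:P != 0 by rewrite polyXsubC_eq0.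
  have hq := divpK (eqbRL (dvdp_XsubCl p r) rpr).
  set q := p %/ ('X - r%:P) in hq.
  have szq : (size q <= n)%N.
    rewrite /q size_divp // size_XsubC /=.
    by move: szp; case: (size p) => // k; rewrite subn1.
  have hq' : q.[a] * q.[b] <= 0.
    move: hab; rewrite -hq !hornerM !hornerXsubC.
    have hpos : 0 < (a - r) * (b - r).
      move: rab; rewrite negb_and -!ltNge => /orP[ra|br].
        by rewrite mulr_gt0 // subr_gt0 // (lt_le_trans ra).
      have br2 : b - r < 0 by rewrite subr_lt0.
      by rewrite nmulr_lgt0 // subr_lt0 (le_lt_trans ab).
    by rewrite mulrACA pmulr_lle0.
  have [x xab rq] := IH q szq ab hq'.
  by exists x => //; rewrite -hq rootM rq.
have h1 : z + z^* \is Num.real by apply/CrealP; rewrite rmorphD /= conjCK addrC.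
have h0 : z * z^* \is Num.real by rewrite -normCK rpredX // normr_real.
pose c1 : R := Sub (z + z^*) h1.
pose c0 : R := Sub (z * z^*) h0.
pose q2 := 'X^2 - c1%:P * 'X + c0%:P.
have hmapq : map_poly val q2 = ('X - z%:P) * ('X - (z^*)%:P).
  rewrite /q2 rmorphD rmorphB rmorphXn rmorphM /= mX' !mC' /=.
  rewrite polyCD polyCM; ring.
have rz' : root F z^*.
  by move: rz; rewrite /root /F => /eqP e; rewrite -mapconj horner_map /= e rmorph0.
have zz : z != z^* by apply: contra zr => /eqP e; apply/CrealP.
have dQ : ('X - z%:P) * ('X - (z^*)%:P) %| F.
  have := uniq_roots_dvdp (p:=F) (rs:=[:: z; z^*]).
  rewrite /= rz rz' /diff_roots mulrC eqxx unitfE subr_eq0 eq_sym zz !big_cons big_nil mulr1.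
  by apply.
have dq2 : q2 %| p by rewrite -(dvdp_map val) hmapq.
have hq := divpK dq2.
set q := p %/ q2 in hq.
have szq2 : size q2 = 3%N.
  by rewrite -(size_map_poly val) hmapq size_mul ?polyXsubC_eq0 // !size_XsubC.
have q20 : q2 != 0 by rewrite -size_poly_eq0 szq2.
have szq : (size q <= n)%N.
  rewrite /q size_divp // szq2 /=.
  by rewrite leq_subLR (leq_trans szp) // addnC addn2 leqnSn.
have q2pos x : 0 < q2.[x].
  rewrite rltE -hmap hmapq /= hornerM !hornerXsubC.
  have -> : val x - z^* = (val x - z)^* by rewrite rmorphB /= (conj_Creal (valP x)).
  rewrite -normCK exprn_gt0 // normr_gt0 subr_eq0.
  by apply: contra zr => /eqP <-; exact: valP.
have hq' : q.[a] * q.[b] <= 0.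
  by move: hab; rewrite -hq !hornerM mulrACA pmulr_lle0 // mulr_gt0.
have [x xab rq] := IH q szq ab hq'.
by exists x => //; rewrite -hq rootM rq.
Qed.
Lemma rsub_ivt : Num.real_closed_axiom R.
Proof.
move=> p a b ab /andP[pa pb].
exact: (@rsub_ivt_aux (size p) p a b (leqnn _) ab (mulr_le0_ge0 pa pb)).
Qed.
End IVT.
HB.instance Definition _ (C : numClosedFieldType) := Num.RealField_isClosed.Build (rsub C) (@rsub_ivt C).

Lemma seq_argmax (T : eqType) (R : realDomainType) (f : T -> R) (x0 : T) (s : seq T) :
  exists2 x, x \in x0 :: s & forall y, y \in x0 :: s -> f y <= f x.
Proof.
elim: s x0 => [|z s IH] x0.
  by exists x0 => [|y]; rewrite ?mem_head // inE => /eqP->.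
have [x xs hx] := IH z.
have [le|lt] := leP (f x0) (f x).
  exists x; first by rewrite inE xs orbT.
  by move=> y; rewrite inE => /orP[/eqP->//|]; exact: hx.
exists x0; first by rewrite mem_head.
move=> y; rewrite inE => /orP[/eqP->//|/hx le]; exact: (le_trans le (ltW lt)).
Qed.

Lemma pmax (R : rcfType) (p : {poly R}) (a b : R) : a <= b ->
  exists2 x, a <= x <= b & forall y, a <= y <= b -> p.[y] <= p.[x].
Proof.
move=> ab.
pose s := b :: roots p^`() a b.
have [x xs hx] := seq_argmax (horner p) a s.
have sab z : z \in a :: s -> a <= z <= b.
  rewrite !inE => /orP[/eqP->|/orP[/eqP->|/roots_in zi]]; rewrite ?lexx ?ab //.
  by rewrite !(itvP zi).
exists x; first exact: sab.
move=> y /andP[ay yb].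
have [p'0|p'0] := eqVneq p^`() 0.
  have : p.[y] <= p.[b].
    apply: (@ler_hornerW _ a b p) => //; last by rewrite in_itv /= ab lexx.
      by move=> z _; rewrite p'0 horner0.
    by rewrite in_itv /= ay yb.
  by move/le_trans; apply; apply: hx; rewrite !inE eqxx orbT.
have [ys|yns] := boolP (y \in a :: s); first exact: hx.
have ay' : a < y by rewrite lt_neqAle ay andbT; apply: contra yns => /eqP->; rewrite mem_head.
have yb' : y < b by rewrite lt_neqAle yb andbT; apply: contra yns => /eqP->; rewrite !inE eqxx orbT.
have yab : y \in `]a, b[ by rewrite in_itv /= ay' yb'.
have nry : ~~ root p^`() y.
  apply: contra yns => ry; rewrite !inE; apply/orP; right; apply/orP; right.
  exact: root_in_roots.
set l := prev_root p^`() a y.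
set r := next_root p^`() y b.
have ls : l \in a :: s.
  rewrite /l; case: prev_rootP => [/eqP|y' _ py' hy' _|c _ -> _]; first by rewrite (negPf p'0).
    rewrite !inE; apply/orP; right; apply/orP; right; apply: root_in_roots => //; last exact/eqP.
    by rewrite in_itv /= (itvP hy') (lt_trans _ yb') // (itvP hy').
  by rewrite (min_idPl (ltW ay')) mem_head.
have rs : r \in a :: s.
  rewrite /r; case: next_rootP => [/eqP|y' _ py' hy' _|c _ -> _]; first by rewrite (negPf p'0).
    rewrite !inE; apply/orP; right; apply/orP; right; apply: root_in_roots => //; last exact/eqP.
    by rewrite in_itv /= (itvP hy') (lt_trans ay') // (itvP hy').
  by rewrite (max_idPl (ltW yb')) !inE eqxx orbT.
have ly : l < y by apply: prev_root_lt.
have yr : y < r by apply: next_root_gt.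
have nolr : {in `]l, r[, forall z, ~~ root p^`() z}.
  move=> z zi; have [zy|yz|->//] := ltgtP z y.
    by apply: (@prev_noroot _ p^`() a y); rewrite in_itv /= zy (itvP zi).
  by apply: (@next_noroot _ p^`() y b); rewrite in_itv /= yz (itvP zi).
have yi : y \in `]l, r[ by rewrite in_itv /= ly yr.
have sg := polyrN0_itv nolr yi.
have yli : y \in `[l, r] by rewrite in_itv /= (ltW ly) (ltW yr).
have lli : l \in `[l, r] by rewrite in_itv /= lexx (ltW (lt_trans ly yr)).
have rri : r \in `[l, r] by rewrite in_itv /= lexx (ltW (lt_trans ly yr)).
have [pos|neg] := ltP 0 (p^`()).[y].
  have : p.[y] <= p.[r].
    apply: (@ler_hornerW _ l r p) => //; last exact: ltW.
    move=> z zi; have := sg z zi; rewrite (gtr0_sg pos) => /eqP.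
    by rewrite sgr_cp0 => /ltW.
  by move/le_trans; apply; exact: hx.
have neg' : (p^`()).[y] < 0 by rewrite lt_neqAle neg andbT; move: nry; rewrite /root.
have : (- p).[l] <= (- p).[y].
  apply: (@ler_hornerW _ l r (- p)) => //; last exact: ltW.
  move=> z zi; have := sg z zi; rewrite (ltr0_sg neg') => /eqP.
  by rewrite sgr_cp0 derivN hornerN oppr_ge0 => /ltW.
rewrite !hornerN lerN2 => /le_trans; apply; exact: hx.
Qed.

Section Circ.
Variable R : rcfType.

Fixpoint PP (k : nat) : {poly R} * {poly R} :=
  match k with
  | 0 => (2%:P, 2%:P + 'X)
  | k'.+1 => let ab := PP k' in
      (ab.2, (2%:P + 'X) * ab.2 - ((1 + 'X) ^+ 2 * (2^-1)%:P) * ab.1)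
  end.

Lemma PP_eval (c s : R) k : c ^+ 2 + s ^+ 2 = 1 ->
  (PP k).1.[c + s] = (1 + c) ^+ k + (1 + s) ^+ k /\
  (PP k).2.[c + s] = (1 + c) ^+ k.+1 + (1 + s) ^+ k.+1.
Proof.
move=> h; elim: k => [|k [IH1 IH2]] /=.
  by rewrite !(hornerD, hornerC, hornerX) !expr0 !expr1; split => //; ring.
split => //.
rewrite !(hornerD, hornerN, hornerM, hornerC, hornerX, horner_exp) IH1 IH2.
have e : (1 + (c + s)) ^+ 2 / 2 = (1 + c) * (1 + s).
  apply: (@mulIf _ 2); first by rewrite pnatr_eq0.
  rewrite -mulrA mulVf ?pnatr_eq0 // mulr1.
  have : (1 + (c + s)) ^+ 2 = 1 + 2 * (c + s) + (c ^+ 2 + s ^+ 2) + 2 * c * s by ring.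
  rewrite h => ->; ring.
rewrite -expr2 e !exprS; ring.
Qed.

Lemma circle_max m : exists c s : R, c ^+ 2 + s ^+ 2 = 1 /\
  forall c' s' : R, c' ^+ 2 + s' ^+ 2 = 1 ->
    (1 + c') ^+ m + (1 + s') ^+ m <= (1 + c) ^+ m + (1 + s) ^+ m.
Proof.
set q2 := Num.sqrt (2 : R).
have q2ge : 0 <= q2 by apply: sqrtr_ge0.
have q2q : - q2 <= q2 by rewrite (@le_trans _ _ 0) // oppr_le0.
have [u /andP[u1 u2] hu] := pmax (PP m).1 q2q.
have u22 : u ^+ 2 <= 2.
  rewrite -[2 in X in _ <= X](@sqr_sqrtr _ 2) ?ler0n //.
  rewrite -/q2 -(real_normK (num_real u)) ler_pXn2r ?nnegrE //.
  by rewrite ler_norml u1 u2.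
set d := Num.sqrt (2 - u ^+ 2).
have d2 : d ^+ 2 = 2 - u ^+ 2 by rewrite sqr_sqrtr // subr_ge0.
exists ((u + d) / 2), ((u - d) / 2); split.
  have e : ((u + d) / 2) ^+ 2 + ((u - d) / 2) ^+ 2 = (u ^+ 2 + d ^+ 2) / 2.
    by field.
  by rewrite e d2 addrC subrK divff // pnatr_eq0.
move=> c' s' h'.
have [<- _] := PP_eval m h'.
have hs : (u + d) / 2 + (u - d) / 2 = u by field.
have h2 : ((u + d) / 2) ^+ 2 + ((u - d) / 2) ^+ 2 = 1.
  have e : ((u + d) / 2) ^+ 2 + ((u - d) / 2) ^+ 2 = (u ^+ 2 + d ^+ 2) / 2.
    by field.
  by rewrite e d2 addrC subrK divff // pnatr_eq0.
have [e2 _] := PP_eval m h2; rewrite hs in e2; rewrite -e2.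
apply: hu.
have : (c' + s') ^+ 2 <= 2.
  have : 0 <= (c' - s') ^+ 2 by apply: sqr_ge0.
  have -> : (c' + s') ^+ 2 = 2 * (c' ^+ 2 + s' ^+ 2) - (c' - s') ^+ 2 by ring.
  rewrite h' mulr1 => ?; rewrite lerBlDr lerDl //.
rewrite -[2 in X in _ <= X -> _](@sqr_sqrtr _ 2) ?ler0n // -/q2.
rewrite -(real_normK (num_real (c' + s'))) ler_pXn2r ?nnegrE //.
by rewrite ler_norml.
Qed.
End Circ.

Section Mx.
Variable C : numClosedFieldType.
Variable n : nat.
Implicit Types A B : 'M[C]_n.

Definition dg (f : 'I_n -> C) : 'M[C]_n := diag_mx (\row_i f i).

Lemma eq_dg f g : (forall i, f i = g i) -> dg f = dg g.
Proof. by move=> h; apply/matrixP => i j; rewrite !mxE h. Qed.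

Lemma dgE f i j : dg f i j = f i *+ (i == j).
Proof. by rewrite !mxE. Qed.

Lemma dgM f g : dg f *m dg g = dg (fun i => f i * g i).
Proof. by apply/matrixP => i j; rewrite mul_diag_mx !mxE mulrnAr. Qed.

Lemma dgD f g : dg f + dg g = dg (fun i => f i + g i).
Proof. by apply/matrixP => i j; rewrite !mxE mulrnDl. Qed.

Lemma dgN f : - dg f = dg (fun i => - f i).
Proof. by apply/matrixP => i j; rewrite !mxE mulNrn. Qed.

Lemma dg1 : dg (fun _ => 1) = 1%:M.
Proof. by apply/matrixP => i j; rewrite !mxE. Qed.

Lemma dgX f k : dg f ^+ k = dg (fun i => f i ^+ k).
Proof.
elim: k => [|k IH].
  rewrite expr0; transitivity (1%:M : 'M[C]_n) => //.
  by rewrite -dg1; apply: eq_dg => i; rewrite expr0.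
by rewrite exprS IH -mulmxE dgM; apply: eq_dg => i; rewrite exprS.
Qed.

Lemma mul_dg m f (A : 'M[C]_(n, m)) : dg f *m A = \matrix_(i, j) (f i * A i j).
Proof. by apply/matrixP => i j; rewrite mul_diag_mx !mxE. Qed.

Lemma mul_mx_dg m (A : 'M[C]_(m, n)) f : A *m dg f = \matrix_(i, j) (A i j * f j).
Proof. by apply/matrixP => i j; rewrite mul_mx_diag !mxE. Qed.

Lemma adjmxM m p q (A : 'M[C]_(m, p)) (B : 'M[C]_(p, q)) :
  adjmx (A *m B) = adjmx B *m adjmx A.
Proof. by rewrite /adjmx map_mxM trmx_mul. Qed.

Lemma adjmxK m p (A : 'M[C]_(m, p)) : adjmx (adjmx A) = A.
Proof. by apply/matrixP => i j; rewrite !mxE conjCK. Qed.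

Lemma adjmxD m p (A B : 'M[C]_(m, p)) : adjmx (A + B) = adjmx A + adjmx B.
Proof. by apply/matrixP => i j; rewrite !mxE rmorphD. Qed.

Lemma adjmxN m p (A : 'M[C]_(m, p)) : adjmx (- A) = - adjmx A.
Proof. by apply/matrixP => i j; rewrite !mxE rmorphN. Qed.

Lemma adjmx_dg f : (forall i, f i \is Num.real) -> adjmx (dg f) = dg f.
Proof.
move=> fr; apply/matrixP => i j; rewrite !mxE eq_sym rmorphMn /=.
by have [->|] := eqVneq i j; rewrite ?mulr0n // !mulr1n conj_Creal.
Qed.

Lemma adjmx1 : adjmx (1%:M : 'M[C]_n) = 1%:M.
Proof. by rewrite -dg1 adjmx_dg // => i; rewrite real1. Qed.

Definition Q (v : 'cV[C]_n) A := expect A v.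

Lemma QD v A B : Q v (A + B) = Q v A + Q v B.
Proof. by rewrite /Q /expect mulmxDr mulmxDl mxE. Qed.

Lemma Q0 v : Q v 0 = 0.
Proof. by rewrite /Q /expect mulmx0 mul0mx mxE. Qed.

Lemma QN v A : Q v (- A) = - Q v A.
Proof. by rewrite /Q /expect mulmxN mulNmx mxE. Qed.

Lemma QB v A B : Q v (A - B) = Q v A - Q v B.
Proof. by rewrite QD QN. Qed.

Lemma QMn v A k : Q v (A *+ k) = Q v A *+ k.
Proof. by elim: k => [|k IH]; rewrite ?mulr0n ?Q0 // !mulrS QD IH. Qed.

Lemma Qsum v I (r : seq I) (P : pred I) (F : I -> 'M[C]_n) :
  Q v (\sum_(i <- r | P i) F i) = \sum_(i <- r | P i) Q v (F i).
Proof. exact: (big_morph _ (QD v) (Q0 v)). Qed.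

Lemma Qdg v f : Q v (dg f) = \sum_i `|v i 0| ^+ 2 * f i.
Proof.
rewrite /Q /expect mul_mx_dg !mxE; apply: eq_bigr => i _.
rewrite !mxE normCK; ring.
Qed.

Lemma Qconj v A B : Q v (adjmx B *m A *m B) = Q (B *m v) A.
Proof. by rewrite /Q /expect adjmxM !mulmxA. Qed.

End Mx.

Section K.
Variable C : numClosedFieldType.
Variable n : nat.
Variable T : 'M[C]_n.
Variable e : 'I_n -> C.
Hypothesis hT : adjmx T = T.
Hypothesis hTT : T *m T = dg e.

Lemma Tconj i j : T i j = (T j i)^*.
Proof. by rewrite -{1}hT !mxE. Qed.

Lemma eE i : e i = \sum_k `|T i k| ^+ 2.
Proof.
have := congr1 (fun M : 'M[C]_n => M i i) hTT; rewrite dgE eqxx mulr1n mxE => <-.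
by apply: eq_bigr => k _; rewrite normCK -Tconj.
Qed.

Lemma e_ge0 i : 0 <= e i.
Proof. by rewrite eE sumr_ge0 // => k _; rewrite exprn_ge0. Qed.

Lemma e_real i : e i \is Num.real.
Proof. exact: ger0_real (e_ge0 i). Qed.

Lemma Trow0 i k : e i = 0 -> T i k = 0.
Proof.
rewrite eE => /psumr_eq0P h.
have /eqP := h (fun k _ => exprn_ge0 2 (normr_ge0 (T i k))) k isT.
by rewrite expf_eq0 /= normr_eq0 => /eqP.
Qed.

Lemma Tcomm_e i j : T i j * e j = e i * T i j.
Proof.
have h : T *m (T *m T) = (T *m T) *m T by rewrite mulmxA.
have := congr1 (fun M : 'M[C]_n => M i j) h; rewrite hTT mul_mx_dg mul_dg !mxE.
by [].
Qed.

Lemma Tsame i j : T i j != 0 -> e i = e j.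
Proof.
move=> nz; have := Tcomm_e i j; rewrite [e i * _]mulrC => /eqP.
by rewrite -subr_eq0 -mulrBr mulf_eq0 (negPf nz) /= subr_eq0 => /eqP.
Qed.

Lemma commT (h : C -> C) : T * dg (fun i => h (e i)) = dg (fun i => h (e i)) * T.
Proof.
rewrite -!mulmxE mul_mx_dg mul_dg; apply/matrixP => i j; rewrite !mxE.
have [->|nz] := eqVneq (T i j) 0; first by rewrite mulr0 mul0r.
by rewrite (Tsame nz) mulrC.
Qed.

Lemma dgT_eq f f' : (forall i, e i != 0 -> f i = f' i) -> dg f * T = dg f' * T.
Proof.
move=> h; rewrite -!mulmxE !mul_dg; apply/matrixP => i j; rewrite !mxE.
have [e0|nz] := eqVneq (e i) 0; first by rewrite Trow0 // !mulr0.
by rewrite h.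
Qed.

Local Notation b i := (sqrtC (e i)).

Lemma b_real i : b i \is Num.real.
Proof. by apply: ger0_real; rewrite sqrtC_ge0 e_ge0. Qed.

Lemma b2 i : b i ^+ 2 = e i.
Proof. exact: sqrtCK. Qed.

Lemma K_main (v : 'cV[C]_n) k :
  Q v (T ^+ k) <= \sum_i `|v i 0| ^+ 2 * b i ^+ k.
Proof.
have TT : T * T = dg e by rewrite -mulmxE hTT.
have Teven j : T ^+ (j.*2) = dg (fun i => b i ^+ (j.*2)).
  rewrite -mul2n exprM expr2 TT dgX; apply: eq_dg => i.
  by rewrite exprM b2.
rewrite -(odd_double_half k); case: (odd k); last first.
  by rewrite add0n Teven Qdg.
set j := k./2.
rewrite add1n exprS Teven.
set B := dg (fun i => b i).
set G := dg (fun i => b i ^+ (j.*2) * (b i)^-1).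
set W := B - T.
have TB : T * B = B * T by exact: (commT (fun x => sqrtC x)).
have TG : T * G = G * T by exact: (commT (fun x => sqrtC x ^+ (j.*2) * (sqrtC x)^-1)).
have BG : B * G = G * B by rewrite -!mulmxE !dgM; apply: eq_dg => i; rewrite mulrC.
have BB : B * B = dg e by rewrite -mulmxE dgM; apply: eq_dg => i; rewrite -expr2 b2.
have WG : W * G = G * W by rewrite /W mulrBl mulrBr BG TG.
have WW : W * W = (B * W) *+ 2.
  rewrite /W !mulrBl !mulrBr BB TT TB mulr2n.
  by rewrite opprB.
have WGW : W * G * W = (G * B * W) *+ 2 by rewrite WG -mulrA WW mulrnAr mulrA.
have hX : G * B * W = dg (fun i => b i ^+ (j.*2).+1) - T * dg (fun i => b i ^+ (j.*2)).
  rewrite /W mulrBr; congr (_ - _).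
    rewrite -!mulmxE !dgM; apply: eq_dg => i.
    have [->|nz] := eqVneq (b i) 0; first by rewrite !expr0n /= !mulr0.
    by rewrite exprS mulfVK // mulrC.
  rewrite (commT (fun x => sqrtC x ^+ (j.*2))) /=.
  rewrite -mulmxE dgM mulmxE; apply: dgT_eq => i nz.
  by rewrite mulfVK // sqrtC_eq0.
have Wh : adjmx W = W.
  rewrite /W adjmxD adjmxN hT adjmx_dg // => i; exact: b_real.
rewrite -Qdg -subr_ge0 -QB -hX -(pmulrn_lge0 _ (isT : (0 < 2)%N)) -QMn -WGW.
rewrite -{1}Wh.
have -> : adjmx W * G * W = adjmx W *m G *m W by [].
rewrite Qconj Qdg sumr_ge0 // => i _.
have bge : 0 <= b i by rewrite sqrtC_ge0 e_ge0.
by rewrite mulr_ge0 ?exprn_ge0 ?mulr_ge0 ?exprn_ge0 ?invr_ge0.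
Qed.
End K.

Section F.
Variable C : numClosedFieldType.
Variable n : nat.

Lemma adj_t (A : 'M[C]_n) : (A ^t Num.conj)%sesqui = adjmx A.
Proof. by rewrite /adjmx map_trmx. Qed.

Lemma herm_sym (S : 'M[C]_n) : adjmx S = S -> S \is hermsymmx.
Proof.
move=> hS; rewrite is_hermitianmxE expr0 scale1r adj_t hS.
by [].
Qed.

Lemma spec (S : 'M[C]_n) : adjmx S = S -> exists U : 'M[C]_n, exists d : 'rV[C]_n,
  [/\ U *m adjmx U = 1%:M, adjmx U *m U = 1%:M, (forall i, d 0 i \is Num.real) &
      S = adjmx U *m diag_mx d *m U].
Proof.
move=> hS; have hs := herm_sym hS.
have /orthomx_spectralP SE := hermitian_normalmx hs.
set U := spectralmx S in SE; set d := spectral_diag S in SE.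
have Uu : U \is unitarymx := spectral_unitarymx S.
have iU : invmx U = adjmx U by rewrite invmx_unitary // adj_t.
exists U, d; split.
- by rewrite -adj_t; apply/unitarymxP.
- by rewrite -iU mulVmx // unitarymx_unit.
- by move=> i; have /mxOverP := hermitian_spectral_diag_real hs; apply.
- by rewrite -iU.
Qed.
End F.

Lemma circleC (C : numClosedFieldType) m : exists c s : C,
  [/\ c \is Num.real, s \is Num.real, c ^+ 2 + s ^+ 2 = 1 &
     forall c' s' : C, c' \is Num.real -> s' \is Num.real -> c' ^+ 2 + s' ^+ 2 = 1 ->
       (1 + c') ^+ m + (1 + s') ^+ m <= (1 + c) ^+ m + (1 + s) ^+ m].
Proof.
have [c [s [h1 h2]]] := circle_max (rsub C) m.
exists (val c), (val s); split; try exact: valP.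
  by have := congr1 val h1; rewrite rmorphD !rmorphXn rmorph1.
move=> c' s' hc hs h.
pose cr : rsub C := Sub c' hc.
pose sr : rsub C := Sub s' hs.
have h' : cr ^+ 2 + sr ^+ 2 = 1.
  by apply: val_inj; rewrite rmorphD !rmorphXn rmorph1.
have := h2 cr sr h'; rewrite rleE !rmorphD !rmorphXn !rmorphD rmorph1.
by [].
Qed.

Section Main.
Variable C : numClosedFieldType.
Variable n : nat.
Variables U : 'M[C]_n.
Hypothesis UUa : U *m adjmx U = 1%:M.
Hypothesis UaU : adjmx U *m U = 1%:M.

Definition cj (X : 'M[C]_n) := U *m X *m adjmx U.

Lemma cjM X Y : cj (X * Y) = cj X * cj Y.
Proof.
rewrite /cj -!mulmxE !mulmxA.
by rewrite -(mulmxA _ (adjmx U) U) UaU mulmx1.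
Qed.

Lemma cj1 : cj 1 = 1.
Proof. by rewrite /cj -[1]/(1%:M : 'M[C]_n) mulmx1 UUa. Qed.

Lemma cjD X Y : cj (X + Y) = cj X + cj Y.
Proof. by rewrite /cj mulmxDr mulmxDl. Qed.

Lemma cjN X : cj (- X) = - cj X.
Proof. by rewrite /cj mulmxN mulNmx. Qed.

Lemma cjX X k : cj (X ^+ k) = cj X ^+ k.
Proof. by elim: k => [|k IH]; rewrite ?expr0 ?cj1 // !exprS cjM IH. Qed.

Lemma Qcj v X : Q v X = Q (U *m v) (cj X).
Proof. by rewrite /cj -Qconj !mulmxA UaU mul1mx -mulmxA UaU mulmx1. Qed.
End Main.

Lemma diag_dg (C : numClosedFieldType) n (d : 'rV[C]_n) : diag_mx d = dg (fun i => d 0 i).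
Proof. by apply/matrixP => i j; rewrite !mxE. Qed.

Lemma Q1 (C : numClosedFieldType) n (v : 'cV[C]_n) :
  Q v 1%:M = \sum_i `|v i 0| ^+ 2.
Proof. by rewrite -dg1 Qdg; apply: eq_bigr => i _; rewrite mulr1. Qed.

Lemma Qbinom (C : numClosedFieldType) n (v : 'cV[C]_n) (X : 'M[C]_n) m :
  Q v ((1 + X) ^+ m) = \sum_(k < m.+1) Q v (X ^+ k) *+ 'C(m, k).
Proof. by rewrite addrC exprD1n Qsum; apply: eq_bigr => k _; rewrite QMn. Qed.

Unset Implicit Arguments.
Theorem lemma2 (C : numClosedFieldType) (n m : nat) (S T : 'M[C]_n) (psi : 'cV[C]_n) :
  is_hermitian S -> is_hermitian T ->
  S *m S + T *m T = 1%:M ->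
  adjmx psi *m psi = 1%:M ->
  (0 < m)%N ->
  exists c s : C,
    [/\ c \is Num.real, s \is Num.real, c ^+ 2 + s ^+ 2 = 1,
        (forall c' s' : C, c' \is Num.real -> s' \is Num.real -> c' ^+ 2 + s' ^+ 2 = 1 ->
           (1 + c') ^+ m + (1 + s') ^+ m <= (1 + c) ^+ m + (1 + s) ^+ m) &
        expect ((1%:M + S) ^+ m + (1%:M + T) ^+ m) psi <= (1 + c) ^+ m + (1 + s) ^+ m].
Proof.
rewrite /is_hermitian => hS hT hST hpsi _.
have [c [s [cr sr cs1 cmax]]] := circleC C m.
exists c, s; split => //.
set M := (1 + c) ^+ m + (1 + s) ^+ m.
have [U [d [UUa UaU dr SE]]] := spec hS.
pose e i := 1 - d 0 i ^+ 2.
pose T' := cj U T.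
pose phi := U *m psi.
have cjS : cj U S = dg (fun i => d 0 i).
  by rewrite /cj SE !mulmxA UUa mul1mx -mulmxA UUa mulmx1 diag_dg.
have hT' : adjmx T' = T'.
  by rewrite /T' /cj !adjmxM adjmxK hT mulmxA.
have hTT' : T' *m T' = dg e.
  have -> : T' *m T' = cj U (T * T) by rewrite (cjM UaU).
  have -> : T * T = 1 - S * S.
    have -> : (1 : 'M[C]_n) = 1%:M by [].
    by rewrite -hST addrC addKr.
  rewrite cjD cjN (cjM UaU) (cj1 UUa) cjS -mulmxE dgM.
  by rewrite -[1]/(1%:M : 'M[C]_n) -dg1 dgN dgD.
change (Q psi ((1%:M + S) ^+ m + (1%:M + T) ^+ m) <= M).
rewrite (Qcj UaU) (cjD U ((1%:M + S) ^+ m) ((1%:M + T) ^+ m)).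
have phi1 : \sum_i `|phi i 0| ^+ 2 = 1.
  rewrite -Q1 /Q /expect mulmx1 /phi adjmxM -!mulmxA (mulmxA (adjmx U)) UaU mul1mx.
  by rewrite hpsi mxE.
rewrite -/phi QD !(cjX UUa UaU) !(cjD U).
have cj1' : cj U 1%:M = 1%:M := cj1 UUa.
rewrite cj1' cjS -/T'.
have e1 : (1%:M + dg (fun i => d 0 i)) ^+ m = dg (fun i => (1 + d 0 i) ^+ m).
  by rewrite -dg1 dgD dgX.
rewrite e1 Qdg.
have -> : (1%:M + T') = 1 + T' by [].
rewrite Qbinom.
pose a i := `|phi i 0| ^+ 2.
pose b i := sqrtC (e i).
have hK : \sum_(k < m.+1) Q phi (T' ^+ k) *+ 'C(m, k) <= \sum_i a i * (1 + b i) ^+ m.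
  apply: (@le_trans _ _ (\sum_(k < m.+1) (\sum_i a i * b i ^+ k) *+ 'C(m, k))).
    by apply: ler_sum => k _; apply: ler_wMn2r; apply: K_main.
  rewrite (eq_bigr (fun k : 'I_m.+1 => \sum_i (a i * b i ^+ k) *+ 'C(m, k))); last first.
    by move=> k _; rewrite sumrMnl.
  rewrite exchange_big /=; apply: ler_sum => i _.
  rewrite addrC exprD1n mulr_sumr le_eqVlt; apply/orP; left; apply/eqP; apply: eq_bigr => k _.
  by rewrite mulrnAr.
apply: le_trans (lerD (lexx _) hK) _.
rewrite -big_split /=.
apply: (@le_trans _ _ (\sum_i a i * M)); last by rewrite -mulr_suml phi1 mul1r.
apply: ler_sum => i _.
rewrite -mulrDr ler_wpM2l ?exprn_ge0 //.
apply: cmax => //.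
- exact: (@b_real _ _ T' e hT' hTT' i).
- by rewrite sqrtCK /e addrC subrK.
Qed.
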